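(* Let $f\ge0$ be integrable on $[-\pi,\pi]$ with $\int f>0$ and such that $\lim_{n\to\infty}\sigma_{n+1}^2(f)/\sigma_n^2(f)=1$. If $t(\lambda)$ is a nonnegative trigonometric polynomial, then $$\liminf_{n\to\infty}\frac{\sigma_n^2(ft)}{\sigma_n^2(f)}\ge t(0).$$
   Context: For a nonnegative integrable weight $w$ on $[-\pi,\pi]$, $\sigma_n^2(w)=\min_{q\in\mathcal{Q}_n(1)}\int_{-\pi}^{\pi}|q(e^{i\lambda})|^2w(\lambda)\,d\lambda$, where $\mathcal{Q}_n(1)$ is the set of complex polynomials of degree at most $n$ with $q(1)=1$ (the variance of the BLUE of a constant mean from $n+1$ observations of a stationary process with spectral density $w$). *)

(* Defs.v *)
From HB Require Import structures.
From mathcomp Require Import all_boot all_order all_algebra.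
From mathcomp Require Import all_classical all_reals all_analysis.
From mathcomp Require Import complex.
Set Implicit Arguments. Unset Strict Implicit. Unset Printing Implicit Defensive.
Import Order.TTheory GRing.Theory Num.Theory.
Local Open Scope classical_set_scope.
Local Open Scope ring_scope.

Section Defs.
Variable R : realType.

Definition expi (x : R) : R[i] := (cos x +i* sin x)%C.

Definition sqmod (z : R[i]) : R := (complex.Re z) ^+ 2 + (complex.Im z) ^+ 2.

Definition Qn1 (n : nat) : set {poly R[i]} :=
  [set q : {poly R[i]} | (size q <= n.+1)%N /\ q.[1] = 1].

(* sigma_n^2(w) = min_{q in Q_n(1)} int_{-pi}^{pi} |q(e^{i l})|^2 w(l) dl
   (defined as the infimum, which is attained) *)
Definition sigma2 (w : R -> R) (n : nat) : R :=
  inf ((fun q : {poly R[i]} => Rintegral (@lebesgue_measure R) `[- pi, pi]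
                     (fun x => sqmod (q.[expi x]) * w x)) @` Qn1 n).

Definition trigpoly (m : nat) (a b : nat -> R) (x : R) : R :=
  \sum_(k < m.+1) (a k * cos (k%:R * x) + b k * sin (k%:R * x)).

End Defs.

(* Main.v *)
Require Import Defs.
From HB Require Import structures.
From mathcomp Require Import all_boot all_order all_algebra.
From mathcomp Require Import all_classical all_reals all_analysis.
From mathcomp Require Import complex.
From mathcomp Require Import ring lra measurable_realfun zify.
Import Order.TTheory GRing.Theory Num.Theory.
Import numFieldTopology.Exports numFieldNormedType.Exports.
Set Implicit Arguments. Unset Strict Implicit. Unset Printing Implicit Defensive.
Local Open Scope classical_set_scope.
Local Open Scope ring_scope.

Lemma sqmodM (R : realType) (z w : R[i]) : sqmod (z * w) = sqmod z * sqmod w.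
Proof. case: z => a b; case: w => c d; rewrite /sqmod /=. ring. Qed.

Lemma sqmod_ge0 (R : realType) (z : R[i]) : 0 <= sqmod z.
Proof. rewrite /sqmod; apply: addr_ge0; exact: sqr_ge0. Qed.

Lemma sqmodD_le (R : realType) (z w : R[i]) : sqmod (z + w) <= 2 * sqmod z + 2 * sqmod w.
Proof. case: z => a b; case: w => c d; rewrite /sqmod /=.
have := sqr_ge0 (a - c); have := sqr_ge0 (b - d); nra. Qed.

Lemma sqmod_expi (R : realType) (x : R) : sqmod (expi x) = 1.
Proof. by rewrite /sqmod /expi /= cos2Dsin2. Qed.

Lemma expiD (R : realType) (x y : R) : expi (x + y) = expi x * expi y.
Proof. apply/eqP; rewrite /expi eq_complex /= cosD sinD. apply/andP; split; apply/eqP; ring. Qed.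

Lemma expi0 (R : realType) : expi (0 : R) = 1.
Proof. by rewrite /expi cos0 sin0. Qed.

Lemma expiX (R : realType) (x : R) n : expi x ^+ n = expi (n%:R * x).
Proof.
elim: n => [|n IH]; first by rewrite expr0 mul0r expi0.
by rewrite exprS IH -expiD -natr1 mulrDl mul1r addrC.
Qed.

Lemma ReMexpi (R : realType) (z : R[i]) x : complex.Re (z * expi x) = complex.Re z * cos x - complex.Im z * sin x.
Proof. by case: z => a b /=. Qed.
Lemma ImMexpi (R : realType) (z : R[i]) x : complex.Im (z * expi x) = complex.Re z * sin x + complex.Im z * cos x.
Proof. case: z => a b /=. ring. Qed.

Lemma ReD (R : realType) (z w : R[i]) : complex.Re (z + w) = complex.Re z + complex.Re w.
Proof. by case: z => a b; case: w. Qed.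
Lemma ImD (R : realType) (z w : R[i]) : complex.Im (z + w) = complex.Im z + complex.Im w.
Proof. by case: z => a b; case: w. Qed.

Lemma mcos (R : realType) : measurable_fun setT (@cos R).
Proof. apply: continuous_measurable_fun. exact: continuous_cos. Qed.
Lemma msin (R : realType) : measurable_fun setT (@sin R).
Proof. apply: continuous_measurable_fun. exact: continuous_sin. Qed.

Lemma poly_expi_good (R : realType) (q : {poly R[i]}) :
  [/\ measurable_fun setT (fun x : R => complex.Re q.[expi x]),
      measurable_fun setT (fun x : R => complex.Im q.[expi x]) &
      exists B, forall x : R, sqmod q.[expi x] <= B].
Proof.
elim/poly_ind: q => [|p c [mr mi [B hB]]].
  split; first (by under eq_fun do rewrite horner0; exact: measurable_cst).
    by under eq_fun do rewrite horner0; exact: measurable_cst.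
  by exists 0; move=> x; rewrite horner0 /sqmod /= expr0n /= addr0.
have E x : (p * 'X + c%:P).[expi x] = p.[expi x] * expi x + c by rewrite hornerMXaddC.
split.
- under eq_fun do rewrite E ReD ReMexpi.
  apply: measurable_funD; last exact: measurable_cst.
  by apply: measurable_funB; apply: measurable_funM => //; [exact: mcos|exact: msin].
- under eq_fun do rewrite E ImD ImMexpi.
  apply: measurable_funD; last exact: measurable_cst.
  by apply: measurable_funD; apply: measurable_funM => //; [exact: msin|exact: mcos].
- exists (2 * B + 2 * sqmod c) => x; rewrite E.
  apply: (le_trans (sqmodD_le _ _)).
  by rewrite sqmodM sqmod_expi mulr1 lerD2r ler_pM2l.
Qed.

Lemma sqmod_poly_meas (R : realType) (q : {poly R[i]}) :
  measurable_fun setT (fun x : R => sqmod q.[expi x]).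
Proof.
case: (poly_expi_good q) => mr mi _; rewrite /sqmod.
by apply: measurable_funD; apply: measurable_funX.
Qed.

Lemma abs_cos_le1 (R : realType) (x : R) : `|cos x| <= 1.
Proof. by rewrite ler_norml cos_le1 cos_geN1. Qed.
Lemma abs_sin_le1 (R : realType) (x : R) : `|sin x| <= 1.
Proof. by rewrite ler_norml sin_le1 sin_geN1. Qed.

Lemma mcos_scale (R : realType) (c : R) : measurable_fun setT (fun x : R => cos (c * x)).
Proof.
apply: (measurableT_comp (@mcos R)).
by apply: measurable_funM; [exact: measurable_cst|exact: measurable_id].
Qed.
Lemma msin_scale (R : realType) (c : R) : measurable_fun setT (fun x : R => sin (c * x)).
Proof.
apply: (measurableT_comp (@msin R)).
by apply: measurable_funM; [exact: measurable_cst|exact: measurable_id].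
Qed.

Lemma trigpoly_meas (R : realType) m (a b : nat -> R) : measurable_fun setT (trigpoly m a b).
Proof.
rewrite /trigpoly; apply: measurable_sum => k.
apply: measurable_funD; apply: measurable_funM; 
  by [exact: measurable_cst|exact: mcos_scale|exact: msin_scale].
Qed.

Lemma trigpoly_bound (R : realType) m (a b : nat -> R) x :
  `|trigpoly m a b x| <= \sum_(k < m.+1) (`|a k| + `|b k|).
Proof.
rewrite /trigpoly; apply: (le_trans (ler_norm_sum _ _ _)); apply: ler_sum => k _.
apply: (le_trans (ler_normD _ _)); apply: lerD; rewrite normrM.
  by rewrite -[leRHS]mulr1; apply: ler_wpM2l => //; exact: abs_cos_le1.
by rewrite -[leRHS]mulr1; apply: ler_wpM2l => //; exact: abs_sin_le1.
Qed.

Lemma bounded_of (R : realType) (D : set R) (h : R -> R) B :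
  (forall x, `|h x| <= B) -> [bounded h x | x in D].
Proof.
move=> hB; rewrite /bounded_near; near=> M => x Dx /=; apply: (le_trans (hB x)).
by near: M; apply: nbhs_pinfty_ge; exact: num_real.
Unshelve. all: by end_near. Qed.

Lemma integrable_Ml (R : realType) (D : set R) (w h : R -> R) B :
  measurable D -> (@lebesgue_measure R).-integrable D (EFin \o w) ->
  measurable_fun setT h -> (forall x, `|h x| <= B) ->
  (@lebesgue_measure R).-integrable D (EFin \o (fun x => h x * w x)).
Proof.
move=> mD wi mh hB.
have H := @integrableMl _ _ R (@lebesgue_measure R) D mD (EFin \o w) h wi (measurable_funS measurableT (subsetT D) mh) (bounded_of D hB).
rewrite (_ : _ \o _ = ((EFin \o w) \* (EFin \o h))%E) //.
by apply/funext => x /=; rewrite mulrC EFinM.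
Qed.

Definition alphac (R : realType) (a b : nat -> R) k : R[i] := ((a k / 2) +i* (- (b k / 2)))%C.
Definition betac (R : realType) (a b : nat -> R) k : R[i] := ((a k / 2) +i* (b k / 2))%C.
Definition Ptrig (R : realType) m (a b : nat -> R) : {poly R[i]} :=
  \sum_(k < m.+1) (alphac a b k *: 'X^(m + k) + betac a b k *: 'X^(m - k)).

Lemma Ptrig_eval (R : realType) m (a b : nat -> R) x :
  (Ptrig m a b).[expi x] = expi (m%:R * x) * ((trigpoly m a b x)%:C)%C.
Proof.
rewrite /Ptrig horner_sum /trigpoly rmorph_sum mulr_sumr; apply: eq_bigr => k _.
have hk : (k <= m)%N by rewrite -ltnS ltn_ord.
rewrite hornerD !hornerZ !hornerXn !expiX natrD (natrB _ hk) mulrDl mulrBl !expiD.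
rewrite /expi cosN sinN /alphac /betac.
move: (cos (m%:R * x) +i* sin (m%:R * x))%C => E; case: E => e1 e2.
by apply/eqP; rewrite eq_complex /=; apply/andP; split; apply/eqP; field.
Qed.

Lemma sqmodC (R : realType) (r : R) : sqmod (r%:C)%C = r ^+ 2.
Proof. by rewrite /sqmod /= expr0n /= addr0. Qed.

Lemma sqmod1 (R : realType) : sqmod (1 : R[i]) = 1.
Proof. by rewrite /sqmod /= expr0n /= addr0 expr1n. Qed.

Lemma sqmodX (R : realType) (z : R[i]) n : sqmod (z ^+ n) = sqmod z ^+ n.
Proof. by elim: n => [|n IH]; rewrite ?expr0 ?sqmod1 // !exprS sqmodM IH. Qed.

Lemma sqmod_Ptrig (R : realType) m (a b : nat -> R) x :
  sqmod (Ptrig m a b).[expi x] = trigpoly m a b x ^+ 2.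
Proof. by rewrite Ptrig_eval sqmodM sqmod_expi mul1r sqmodC. Qed.

Lemma Ptrig1 (R : realType) m (a b : nat -> R) :
  (Ptrig m a b).[1] = ((trigpoly m a b 0)%:C)%C.
Proof. by rewrite -(expi0 R) Ptrig_eval mulr0 expi0 mul1r. Qed.

Lemma size_Ptrig (R : realType) m (a b : nat -> R) : (size (Ptrig m a b) <= (m + m).+1)%N.
Proof.
rewrite /Ptrig; apply: (big_ind (fun p : {poly R[i]} => (size p <= (m + m).+1)%N)).
- by rewrite size_poly0.
- by move=> p q hp hq; apply: (leq_trans (size_add _ _)); rewrite geq_max hp hq.
move=> k _; have hk : (k <= m)%N by rewrite -ltnS ltn_ord.
apply: (leq_trans (size_add _ _)); rewrite geq_max; apply/andP; split;
  apply: (leq_trans (size_scale_leq _ _)); rewrite size_polyXn; lia.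
Qed.

Definition hpoly (R : realType) K : {poly R[i]} := (((2^-1 : R) +i* 0)%C *: ('X + 1)) ^+ K.

Lemma hpoly_eval (R : realType) K (z : R[i]) :
  (hpoly R K).[z] = (((2^-1 : R) +i* 0)%C * (z + 1)) ^+ K.
Proof. by rewrite /hpoly horner_exp hornerZ hornerD hornerX hornerC. Qed.

Lemma hpoly1 (R : realType) K : (hpoly R K).[1] = 1.
Proof.
rewrite hpoly_eval; suff -> : (((2^-1 : R) +i* 0)%C * (1 + 1)) = 1 by rewrite expr1n.
by apply/eqP; rewrite eq_complex /=; apply/andP; split; apply/eqP; field.
Qed.

Lemma sqmod_hpoly (R : realType) K (x : R) :
  sqmod (hpoly R K).[expi x] = ((1 + cos x) / 2) ^+ K.
Proof.
rewrite hpoly_eval sqmodX; congr (_ ^+ _).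
rewrite /sqmod /expi /=; have h := cos2Dsin2 x.
transitivity ((cos x ^+ 2 + sin x ^+ 2 + 2 * cos x + 1) / 4); first by field.
by rewrite h; field.
Qed.

Lemma size_hpoly (R : realType) K : (size (hpoly R K) <= K.+1)%N.
Proof.
rewrite /hpoly; apply: (leq_trans (size_exp_leq _ _)).
have : (size ((((2^-1 : R) +i* 0)%C *: ('X + 1 : {poly R[i]}))%R) <= 2)%N.
  by apply: (leq_trans (size_scale_leq _ _)); rewrite size_XaddC.
move=> h; rewrite ltnS -[X in (_ <= X)%N]mul1n; apply: leq_mul => //.
by move: h; case: (size _) => [|[|[|n]]].
Qed.

Lemma Qn1_one (R : realType) n : Qn1 n (1 : {poly R[i]}).
Proof. by split; rewrite ?size_poly1 // -polyC1 hornerC. Qed.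

Lemma sigma2_ge0 (R : realType) (w : R -> R) n :
  (forall x, x \in `[- pi, pi] -> 0 <= w x) -> 0 <= sigma2 w n.
Proof.
move=> w0; rewrite /sigma2; apply: lb_le_inf.
  by eexists; exists 1; first exact: Qn1_one.
move=> _ [q _ <-]; apply: Rintegral_ge0 => x Dx.
by apply: mulr_ge0; [exact: sqmod_ge0|exact: w0].
Qed.

Lemma sigma2_le (R : realType) (w : R -> R) n q :
  (forall x, x \in `[- pi, pi] -> 0 <= w x) -> Qn1 n q ->
  sigma2 w n <= Rintegral (@lebesgue_measure R) `[- pi, pi] (fun x => sqmod q.[expi x] * w x).
Proof.
move=> w0 hq; rewrite /sigma2; apply: ge_inf; last by exists q.
exists 0 => _ [p _ <-]; apply: Rintegral_ge0 => x Dx.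
by apply: mulr_ge0; [exact: sqmod_ge0|exact: w0].
Qed.

Lemma sqmod_bound (R : realType) (q : {poly R[i]}) : exists B, forall x : R, `|sqmod q.[expi x]| <= B.
Proof.
case: (poly_expi_good q) => _ _ [B hB]; exists B => x.
by rewrite ger0_norm ?sqmod_ge0.
Qed.

Lemma key (R : realType) (f : R -> R) m (a b : nat -> R) K M n q :
  (forall x, x \in `[- pi, pi] -> 0 <= f x) ->
  (@lebesgue_measure R).-integrable `[- pi, pi] (EFin \o f) ->
  (forall x, 0 <= trigpoly m a b x) ->
  (forall x, trigpoly m a b x * ((1 + cos x) / 2) ^+ K <= M) -> 0 < M ->
  0 < trigpoly m a b 0 -> Qn1 n q ->
  (trigpoly m a b 0) ^+ 2 / M * sigma2 f (n + (m + m) + K) <=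
  Rintegral (@lebesgue_measure R) `[- pi, pi]
    (fun x => sqmod q.[expi x] * (f x * trigpoly m a b x)).
Proof.
move=> f0 fi t0 tM M0 tz [szq q1].
set t := trigpoly m a b; set c := t 0 ^+ 2 / M.
have c0 : 0 <= c by rewrite /c divr_ge0 // ?sqr_ge0 // ltW.
set p := ((t 0)^-1)%:C%C *: (q * (Ptrig m a b * hpoly R K)).
have pQ : Qn1 (n + (m + m) + K) p.
  split.
  - apply: (leq_trans (size_scale_leq _ _)).
    have h1 := size_mul_leq q (Ptrig m a b * hpoly R K).
    have h2 := size_mul_leq (Ptrig m a b) (hpoly R K).
    have h3 := size_Ptrig m a b; have h4 := size_hpoly R K.
    rewrite -!subn1 in h1 h2 *; lia.
  - rewrite /p hornerZ !hornerM q1 Ptrig1 hpoly1 mul1r mulr1 -rmorphM mulVf //.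
    by rewrite gt_eqF.
have mD : measurable (`[- pi, pi] : set R) by exact: measurable_itv.
have [B hB] := sqmod_bound p.
have int1 : (@lebesgue_measure R).-integrable `[- pi, pi]
    (EFin \o (fun x => (c * sqmod p.[expi x]) * f x)).
  apply: (integrable_Ml (B := c * B)) => //.
    by apply: measurable_funM; [exact: measurable_cst|exact: sqmod_poly_meas].
  by move=> x; rewrite normrM ger0_norm // ler_wpM2l.
have [Bt hBt] : exists Bt, forall x, `|t x| <= Bt by eexists; exact: trigpoly_bound.
have intft : (@lebesgue_measure R).-integrable `[- pi, pi] (EFin \o (fun x => f x * t x)).
  rewrite (_ : (fun x => f x * t x) = (fun x => t x * f x)); last first.
    by apply/funext => x; rewrite mulrC.
  exact: (integrable_Ml (B := Bt)) (trigpoly_meas m a b) hBt.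
have [Bq hBq] := sqmod_bound q.
have int2 : (@lebesgue_measure R).-integrable `[- pi, pi]
    (EFin \o (fun x => sqmod q.[expi x] * (f x * t x))).
  exact: (integrable_Ml (B := Bq)) intft (sqmod_poly_meas q) hBq.
apply: (le_trans (ler_wpM2l c0 (sigma2_le f0 pQ))).
have -> : c * Rintegral (@lebesgue_measure R) `[- pi, pi] (fun x => sqmod p.[expi x] * f x)
   = Rintegral (@lebesgue_measure R) `[- pi, pi] (fun x => (c * sqmod p.[expi x]) * f x).
  rewrite -RintegralZl //; last first.
    exact: (integrable_Ml (B := B)) fi (sqmod_poly_meas p) hB.
  by congr Rintegral; apply/funext => x; rewrite mulrA.
apply: le_Rintegral => // x Dx.
have fx0 : 0 <= f x by exact: f0.
rewrite /p hornerZ !hornerM !sqmodM sqmodC sqmod_Ptrig sqmod_hpoly.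
set g := sqmod q.[expi x]; set w := ((1 + cos x) / 2) ^+ K.
have g0 : 0 <= g by exact: sqmod_ge0.
have tx0 : 0 <= t x by exact: t0.
rewrite -[trigpoly m a b x]/(t x).
have -> : c * ((t 0)^-1 ^+ 2 * (g * (t x ^+ 2 * w))) * f x
    = (g * (f x * t x)) * (t x * w / M).
  by rewrite /c; field; rewrite ?gt_eqF.
apply: ler_piMr; first by rewrite !mulr_ge0.
by rewrite ler_pdivrMr // mul1r; exact: tM.
Qed.

Lemma sigma_ft_ge (R : realType) (f : R -> R) m (a b : nat -> R) K M n :
  (forall x, x \in `[- pi, pi] -> 0 <= f x) ->
  (@lebesgue_measure R).-integrable `[- pi, pi] (EFin \o f) ->
  (forall x, 0 <= trigpoly m a b x) ->
  (forall x, trigpoly m a b x * ((1 + cos x) / 2) ^+ K <= M) -> 0 < M ->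
  0 < trigpoly m a b 0 ->
  (trigpoly m a b 0) ^+ 2 / M * sigma2 f (n + (m + m) + K) <=
  sigma2 (fun x => f x * trigpoly m a b x) n.
Proof.
move=> f0 fi t0 tM M0 tz; rewrite [X in _ <= X]/sigma2; apply: lb_le_inf.
  by eexists; exists 1; first exact: Qn1_one.
by move=> _ [q hq <-]; exact: key.
Qed.

Lemma bern (R : realType) (v : R) K : 0 <= v <= 1 -> (1 - v) ^+ K * (1 + K%:R * v) <= 1.
Proof.
case/andP=> v0 v1; elim: K => [|K IH]; first by rewrite expr0 mul0r addr0 mulr1.
have P0 : 0 <= (1 - v) ^+ K by apply: exprn_ge0; lra.
have K0 : (0:R) <= K%:R := ler0n _ _.
rewrite exprS -natr1.
have h : 0 <= (1 - v) ^+ K * ((K%:R + 1) * v ^+ 2).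
  by apply: mulr_ge0 => //; apply: mulr_ge0; [lra|exact: sqr_ge0].
set P := (1 - v) ^+ K in P0 IH h *.
have -> : (1 - v) * P * (1 + (K%:R + 1) * v) = P * (1 + K%:R * v) - P * ((K%:R + 1) * v ^+ 2).
  by ring.
lra.
Qed.

Lemma bern2 (R : realType) (v : R) K : 0 <= v <= 1 -> K%:R * (v * (1 - v) ^+ K) <= 1.
Proof.
move=> hv; apply: le_trans (bern K hv).
have P0 : 0 <= (1 - v) ^+ K by apply: exprn_ge0; case/andP: hv => ? ?; lra.
set P := (1 - v) ^+ K in P0 *.
have -> : P * (1 + K%:R * v) = K%:R * (v * P) + P by ring.
lra.
Qed.

Lemma abs_sin_nat (R : realType) k (y : R) : `|sin (k%:R * y)| <= k%:R * `|sin y|.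
Proof.
elim: k => [|k IH]; first by rewrite !mul0r sin0 normr0.
rewrite -natr1 mulrDl mul1r sinD.
apply: (le_trans (ler_normD _ _)); rewrite mulrDl mul1r !normrM.
apply: lerD.
  by apply: (le_trans _ IH); rewrite -[leRHS]mulr1 ler_wpM2l // abs_cos_le1.
by rewrite -[leRHS]mul1r ler_wpM2r // abs_cos_le1.
Qed.

Lemma cos_double (R : realType) (u : R) : cos (u + u) = 1 - 2 * sin u ^+ 2.
Proof. rewrite cosD -!expr2 sin2cos2; ring. Qed.
Lemma sin_double (R : realType) (u : R) : sin (u + u) = 2 * sin u * cos u.
Proof. rewrite sinD; ring. Qed.

Lemma trigpoly0 (R : realType) m (a b : nat -> R) : trigpoly m a b 0 = \sum_(k < m.+1) a k.
Proof. by apply: eq_bigr => k _; rewrite mulr0 cos0 sin0 !mulr0 mulr1 addr0. Qed.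

Lemma t_upper (R : realType) m (a b : nat -> R) (y : R) :
  trigpoly m a b (y + y) <= trigpoly m a b 0
     + (\sum_(k < m.+1) `|a k| * (2 * k%:R ^+ 2)) * sin y ^+ 2
     + (\sum_(k < m.+1) `|b k| * (2 * k%:R)) * `|sin y|.
Proof.
rewrite trigpoly0 /trigpoly !mulr_suml -!big_split /=; apply: ler_sum => k _.
rewrite mulrDr cos_double sin_double.
set s1 := sin (k%:R * y); set c1 := cos (k%:R * y); set S := sin y.
have hs : `|s1| <= k%:R * `|S| by exact: abs_sin_nat.
have hc : `|c1| <= 1 by exact: abs_cos_le1.
have e1 : a k * (1 - 2 * s1 ^+ 2) <= a k + `|a k| * (2 * k%:R ^+ 2) * S ^+ 2.
  have hs2 : s1 ^+ 2 <= k%:R ^+ 2 * S ^+ 2.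
    have := ler_pM (normr_ge0 s1) (normr_ge0 s1) hs hs.
    by rewrite -!expr2 exprMn !real_normK ?num_real.
  have ha : - a k <= `|a k| by rewrite -normrN ler_norm.
  have h1 : - a k * s1 ^+ 2 <= `|a k| * s1 ^+ 2 := ler_wpM2r (sqr_ge0 _) ha.
  have h2 : `|a k| * s1 ^+ 2 <= `|a k| * (k%:R ^+ 2 * S ^+ 2) := ler_wpM2l (normr_ge0 _) hs2.
  have -> : a k * (1 - 2 * s1 ^+ 2) = a k + 2 * (- a k * s1 ^+ 2) by ring.
  have -> : `|a k| * (2 * k%:R ^+ 2) * S ^+ 2 = 2 * (`|a k| * (k%:R ^+ 2 * S ^+ 2)) by ring.
  lra.
have e2 : b k * (2 * s1 * c1) <= `|b k| * (2 * k%:R) * `|S|.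
  apply: (le_trans (ler_norm _)); rewrite !normrM (ger0_norm (ler0n _ 2)).
  have hh : `|s1| * `|c1| <= k%:R * `|S| by rewrite -[leRHS]mulr1; apply: ler_pM.
  have -> : `|b k| * (2 * k%:R) * `|S| = `|b k| * (2 * (k%:R * `|S|)) by ring.
  apply: ler_wpM2l => //; rewrite -mulrA; apply: ler_wpM2l => //.
lra.
Qed.

Lemma tbound (R : realType) m (a b : nat -> R) e :
  (forall x, 0 <= trigpoly m a b x) -> 0 < e ->
  exists K : nat, forall x, trigpoly m a b x * ((1 + cos x) / 2) ^+ K <= trigpoly m a b 0 + e.
Proof.
move=> t0 e0.
set A1 := \sum_(k < m.+1) `|a k| * (2 * k%:R ^+ 2).
set A2 := \sum_(k < m.+1) `|b k| * (2 * k%:R).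
have A1p : 0 <= A1 by apply: sumr_ge0 => k _; rewrite mulr_ge0 // mulr_ge0 // exprn_ge0.
have A2p : 0 <= A2 by apply: sumr_ge0 => k _; rewrite mulr_ge0 // mulr_ge0.
set d := e / (2 * (A2 + 1)).
have d0 : 0 < d by rewrite /d divr_gt0 // mulr_gt0 // ltr_wpDl.
set B := A1 + A2 / (4 * d).
have B0 : 0 <= B by rewrite /B addr_ge0 // divr_ge0 // mulr_ge0 // ltW.
have hA2d : A2 * d <= e / 2.
  have -> : A2 * d = e / 2 * (A2 / (A2 + 1)) by rewrite /d; field; rewrite gt_eqF // ltr_wpDl.
  apply: ler_piMr; first by rewrite divr_ge0 // ltW.
  by rewrite ler_pdivrMr ?mul1r ?lerDl // ltr_wpDl.
have hK := @archi_boundP R (2 * B / e) (divr_ge0 (mulr_ge0 (ler0n _ 2) B0) (ltW e0)).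
set K := Num.Def.archi_bound (2 * B / e) in hK.
have hK' : 2 * B <= e * K%:R.
  have := hK; rewrite ltr_pdivrMr // => h; rewrite [e * _]mulrC; exact: ltW h.
exists K => x.
set y := x / 2; have xy : x = y + y by rewrite /y -splitr.
have ht := t_upper m a b y; rewrite -xy -/A1 -/A2 in ht.
have hw : (1 + cos x) / 2 = 1 - sin y ^+ 2 by rewrite xy cos_double; field.
rewrite hw.
set S := sin y in ht *; set v := S ^+ 2 in ht *.
have v01 : 0 <= v <= 1.
  apply/andP; split; first exact: sqr_ge0.
  by rewrite /v /S sin2cos2 lerBlDr lerDl sqr_ge0.
have hS : `|S| <= d + v / (4 * d).
  have hv : v = `|S| ^+ 2 by rewrite real_normK ?num_real.
  have -> : `|S| = d + v / (4 * d) - (`|S| - 2 * d) ^+ 2 / (4 * d).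
    by rewrite hv; field; rewrite gt_eqF.
  by rewrite lerBlDr lerDl divr_ge0 ?sqr_ge0 // mulr_ge0 // ltW.
have htB : trigpoly m a b x <= (trigpoly m a b 0 + A2 * d) + B * v.
  have h1 : A2 * `|S| <= A2 * (d + v / (4 * d)) := ler_wpM2l A2p hS.
  have e1 : A2 * (d + v / (4 * d)) = A2 * d + A2 / (4 * d) * v.
    by field; rewrite gt_eqF.
  rewrite e1 in h1.
  rewrite /B mulrDl; lra.
set w := 1 - v.
have w0 : 0 <= w by rewrite /w subr_ge0; case/andP: v01.
have w1 : w <= 1 by rewrite /w lerBlDr lerDl; case/andP: v01.
have wK0 : 0 <= w ^+ K := exprn_ge0 K w0.
have wK1 : w ^+ K <= 1 := exprn_ile1 K w0 w1.
have hb := bern2 K v01; rewrite -/w in hb.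
have T0 : 0 <= trigpoly m a b 0 + A2 * d by rewrite addr_ge0 // mulr_ge0 // ltW.
have z0 : 0 <= v * w ^+ K by rewrite mulr_ge0 //; case/andP: v01.
have hBz : B * (v * w ^+ K) <= e / 2.
  have h1 : 0 <= (e * K%:R - 2 * B) * (v * w ^+ K) by rewrite mulr_ge0 // subr_ge0.
  have h2 : e * (K%:R * (v * w ^+ K)) <= e * 1 := ler_wpM2l (ltW e0) hb.
  have -> : e / 2 = (e * 1) / 2 by rewrite mulr1.
  rewrite ler_pdivlMr //.
  have -> : B * (v * w ^+ K) * 2 = e * (K%:R * (v * w ^+ K)) - (e * K%:R - 2 * B) * (v * w ^+ K) by ring.
  lra.
apply: (le_trans (ler_wpM2r wK0 htB)); rewrite mulrDl.
have := ler_piMr T0 wK1; rewrite mulrA in hBz |- *.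
lra.
Qed.

Lemma eventually_ratio (R : realType) (s : nat -> R) :
  (fun n => s n.+1 / s n) @ \oo --> (1 : R) ->
  forall eta : R, 0 < eta -> exists N, forall n, (N <= n)%N -> 1 - eta < s n.+1 / s n.
Proof.
move=> hc eta eta0; have := cvgr_dist_lt _ _ hc eta eta0.
case=> N _ HN; exists N => n Nn; have := HN n Nn.
rewrite /= ltr_norml => /andP[h1 h2]; lra.
Qed.

Lemma bern_lower (R : realType) (eta : R) i : 0 <= eta <= 1 -> 1 - i%:R * eta <= (1 - eta) ^+ i.
Proof.
case/andP=> e0 e1; elim: i => [|i IH]; first by rewrite mul0r subr0 expr0.
rewrite exprS -natr1.
have h1 : 0 <= 1 - eta by lra.
have := ler_wpM2l h1 IH.
have h2 : 0 <= i%:R * eta * eta by rewrite !mulr_ge0.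
have -> : (1 - eta) * (1 - i%:R * eta) = 1 - (i%:R + 1) * eta + i%:R * eta * eta by ring.
lra.
Qed.

Lemma geom_lower (R : realType) (s : nat -> R) (eta : R) N :
  0 < eta < 1 -> (forall n, 0 <= s n) ->
  (forall n, (N <= n)%N -> 1 - eta < s n.+1 / s n) ->
  forall n, (N <= n)%N -> 0 < s n /\ forall i, (1 - eta) ^+ i * s n <= s (n + i)%N.
Proof.
case/andP=> e0 e1 s0 hr.
have pos n : (N <= n)%N -> 0 < s n.
  move=> Nn; rewrite lt0r s0 andbT; apply/negP => /eqP h.
  by have := hr n Nn; rewrite h invr0 mulr0; lra.
move=> n Nn; split; first exact: pos.
elim=> [|i IH]; first by rewrite expr0 mul1r addn0.
have hNi : (N <= n + i)%N by lia.
have := hr _ hNi; rewrite ltr_pdivlMr ?pos // addnS => h.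
apply: (le_trans _ (ltW h)); rewrite exprS -mulrA ler_wpM2l //; lra.
Qed.


Theorem lemma5p1 (R : realType) (f : R -> R) (m : nat) (a b : nat -> R) :
  (forall x, x \in `[- pi, pi] -> 0 <= f x) ->
  (@lebesgue_measure R).-integrable `[- pi, pi] (EFin \o f) ->
  0 < Rintegral (@lebesgue_measure R) `[- pi, pi] f ->
  (fun n => sigma2 f n.+1 / sigma2 f n) @ \oo --> (1 : R) ->
  (forall x, 0 <= trigpoly m a b x) ->
  ((trigpoly m a b 0)%:E <=
   limn_einf (fun n => (sigma2 (fun x => f x * trigpoly m a b x) n
                        / sigma2 f n)%:E))%E.
Proof.
move=> f0 fi fpos hc tpos.
have t00p : 0 <= trigpoly m a b 0 := tpos 0.
have s0 : forall n, 0 <= sigma2 f n := fun n => sigma2_ge0 n f0.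
have ft0 : forall x, x \in `[- pi, pi] -> 0 <= f x * trigpoly m a b x.
  by move=> x hx; rewrite mulr_ge0 // f0.
have st0 : forall n, 0 <= sigma2 (fun x => f x * trigpoly m a b x) n.
  by move=> n; exact: sigma2_ge0.
suff H : forall e, 0 < e -> exists N, forall n, (N <= n)%N ->
    trigpoly m a b 0 - e <= sigma2 (fun x => f x * trigpoly m a b x) n / sigma2 f n.
  apply/lee_addgt0Pr => e e0.
  have [N HN] := H e e0.
  rewrite -leeBlDr // limn_einf_lim; apply: lime_ge; first exact: is_cvg_einfs.
  exists N => // n /= Nn; apply: le_ereal_inf_tmp => _ [k /= nk <-].
  by rewrite -EFinB lee_fin; apply: HN; exact: leq_trans Nn nk.
move=> e e0.
have [tz|t00pos] : trigpoly m a b 0 = 0 \/ 0 < trigpoly m a b 0.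
  by move: t00p; rewrite le_eqVlt => /orP[/eqP <-|]; [left|right].
  exists 0%N => n _; rewrite tz sub0r; apply: (le_trans (y := 0)).
    by rewrite oppr_le0 ltW.
  exact: divr_ge0.
set t00 := trigpoly m a b 0 in t00p t00pos *.
have e2 : 0 < e / 2 by rewrite divr_gt0.
have [K hK] := tbound tpos e2.
set M := t00 + e / 2 in hK.
have M0 : 0 < M by rewrite /M addr_gt0.
set L := (m + m + K)%N.
set dl := e / (2 * t00 + e).
have den0 : 0 < 2 * t00 + e by rewrite addr_gt0 // mulr_gt0.
have dl0 : 0 < dl by rewrite divr_gt0.
have dl1 : dl < 1 by rewrite /dl ltr_pdivrMr // mul1r ltrDr mulr_gt0.
set eta := dl / (L%:R + 1).
have L0 : 0 < (L%:R : R) + 1 by rewrite ltr_wpDl.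
have eta0 : 0 < eta by rewrite divr_gt0.
have hLeta : L%:R * eta <= dl.
  have -> : L%:R * eta = dl * (L%:R / (L%:R + 1)) by rewrite /eta; field; rewrite gt_eqF.
  apply: ler_piMr; first exact: ltW.
  by rewrite ler_pdivrMr // mul1r lerDl.
have eta1 : eta < 1.
  apply: (le_lt_trans _ dl1); rewrite /eta ler_pdivrMr // ler_peMr ?lerDr //; exact: ltW.
have [N HN] := eventually_ratio hc eta0.
exists N => n Nn.
have eta01 : 0 < eta < 1 by rewrite eta0 eta1.
have [sn0 hgeom] := geom_lower eta01 s0 HN Nn.
have hL := hgeom L.
have eta01' : 0 <= eta <= 1 by rewrite (ltW eta0) (ltW eta1).
have hb := @bern_lower R eta L eta01'.
have hchain : (1 - dl) * sigma2 f n <= sigma2 f (n + (m + m) + K).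
  rewrite -addnA; apply: le_trans hL; apply: ler_wpM2r; first exact: ltW.
  apply: le_trans hb; lra.
have hst := sigma_ft_ge n f0 fi tpos hK M0 t00pos.
rewrite ler_pdivlMr //; apply: le_trans hst.
have c0 : 0 <= t00 ^+ 2 / M by rewrite divr_ge0 ?sqr_ge0 // ltW.
apply: (le_trans _ (ler_wpM2l c0 hchain)).
rewrite mulrA; apply: ler_wpM2r; first exact: ltW.
have -> : t00 ^+ 2 / M * (1 - dl) = 4 * t00 ^+ 3 / (2 * t00 + e) ^+ 2.
  by rewrite /M /dl; field; rewrite ?gt_eqF.
rewrite ler_pdivlMr ?exprn_gt0 //.
have -> : (t00 - e) * (2 * t00 + e) ^+ 2 = 4 * t00 ^+ 3 - (3 * t00 * e ^+ 2 + e ^+ 3) by ring.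
have : 0 <= 3 * t00 * e ^+ 2 + e ^+ 3 by rewrite addr_ge0 // ?mulr_ge0 // ?exprn_ge0 // ltW.
lra.
Qed.
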